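(* Let $\mu$ be the invariant self-similar measure of a homogeneous WIFS $(\lambda x+t_i,p_i)_{i\in I}$ with $0<\lambda<1$, supported in $[0,1)$. Let $q>1$ be such that $\alpha=\tau_\mu'(q)$ exists, and write $\tau=\tau_\mu$. (i) For every $\kappa>0$ there is $\eta=\eta(\kappa,q)>0$ such that for all sufficiently large $m$: for every $s\in\mathbb{N}$, every $I\in\mathcal{D}_s$ and every collection $\mathcal{D}'$ of intervals of $\mathcal{D}_{s+m}$ contained in $I$ with $|\mathcal{D}'|\le 2^{(\tau^*(\alpha)-\kappa)m}$, \[ \sum_{J\in\mathcal{D}'}\mu(J)^q\le 2^{-(\tau(q)+\eta)m}\mu(2I)^q . \] (ii) For every $\delta>0$, for all sufficiently large $m$, for every $s\in\mathbb{N}$ and $I\in\mathcal{D}_s$, \[ \sum_{J\in\mathcal{D}_{s+m},\,J\subset I}\mu(J)^q\le 2^{-(\tau(q)-\delta)m}\mu(2I)^q . \]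
   Context: Invariant measure: $\mu=\sum_ip_i\,f_i\mu$ with $f_i(x)=\lambda x+t_i$. Logs base 2. $\mathcal{D}_m=\{[j2^{-m},(j+1)2^{-m}):j\in\mathbb{Z}\}$. For $q>0$, $\tau_\mu(q)=\liminf_{m\to\infty}-\frac1m\log\sum_{J\in\mathcal{D}_m,\mu(J)>0}\mu(J)^q$, and $\tau^*(\alpha)=\inf_{q>0}(\alpha q-\tau(q))$ (the Legendre transform). $2I$ denotes the interval with the same center as $I$ and twice its length. *)

(* Defs.v *)
From Stdlib Require Import Reals Lra Lia ZArith List.
Open Scope R_scope.

Inductive borel : (R -> Prop) -> Prop :=
| borel_Ioo (a b : R) : borel (fun x => a < x < b)
| borel_compl (A : R -> Prop) : borel A -> borel (fun x => ~ A x)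
| borel_cunion (A : nat -> R -> Prop) :
    (forall n, borel (A n)) -> borel (fun x => exists n, A n x).

Record is_prob_measure (mu : (R -> Prop) -> R) : Prop := {
  pm_nonneg : forall A, borel A -> 0 <= mu A;
  pm_sigma_add : forall A : nat -> R -> Prop,
      (forall n, borel (A n)) ->
      (forall n k x, n <> k -> A n x -> A k x -> False) ->
      infinite_sum (fun n => mu (A n)) (mu (fun x => exists n, A n x));
  pm_total : mu (fun _ => True) = 1
}.

Fixpoint fsum (f : nat -> R) (n : nat) : R :=
  match n with O => 0 | S k => fsum f k + f k end.

(* mu is invariant for the homogeneous WIFS (lam x + t i, p i)_{i<n}:
   mu = sum_i p_i f_i mu, where (f_i mu)(A) = mu (f_i^{-1} A). *)
Definition wifs_invariant (n : nat) (lam : R) (t p : nat -> R)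
  (mu : (R -> Prop) -> R) : Prop :=
  forall A, borel A -> mu A = fsum (fun i => p i * mu (fun x => A (lam * x + t i))) n.

(* x^q for x >= 0, q > 0, with 0^q = 0 *)
Definition rpow (x q : R) : R := if Rlt_dec 0 x then Rpower x q else 0.

Definition log2 (x : R) : R := ln x / ln 2.

Definition dyad (s : nat) (j : Z) : R -> Prop :=
  fun x => IZR j / 2 ^ s <= x < (IZR j + 1) / 2 ^ s.

(* 2I for I = dyad s j : same center, twice the length *)
Definition dyad2 (s : nat) (j : Z) : R -> Prop :=
  fun x => (IZR j - / 2) / 2 ^ s <= x < (IZR j + 3 / 2) / 2 ^ s.

(* sum_{J in D_m, mu(J) > 0} mu(J)^q ; since mu is supported in [0,1),
   only the J = dyad m j with 0 <= j < 2^m can have positive mass. *)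
Definition moment_sum (mu : (R -> Prop) -> R) (q : R) (m : nat) : R :=
  fsum (fun j => rpow (mu (dyad m (Z.of_nat j))) q) (2 ^ m)%nat.

Definition is_liminf (a : nat -> R) (l : R) : Prop :=
  forall eps, 0 < eps ->
    (exists N, forall k, (N <= k)%nat -> l - eps < a k) /\
    (forall N, exists k, (N <= k)%nat /\ a k < l + eps).

Definition is_Lq_spectrum (mu : (R -> Prop) -> R) (tau : R -> R) : Prop :=
  forall q, 0 < q ->
    is_liminf (fun m => - log2 (moment_sum mu q m) / INR m) (tau q).

Definition is_legendre (tau : R -> R) (alpha Tstar : R) : Prop :=
  (forall q, 0 < q -> Tstar <= alpha * q - tau q) /\
  (forall b, (forall q, 0 < q -> b <= alpha * q - tau q) -> b <= Tstar).

(* sum over a collection (list of indices k of D_{s+m}) of mu(J)^q *)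
Definition coll_sum (mu : (R -> Prop) -> R) (q : R) (sm : nat) (D : list Z) : R :=
  fold_right (fun k acc => rpow (mu (dyad sm k)) q + acc) 0 D.

(* Main.v *)
Require Import Defs.
From Stdlib Require Import Reals ZArith List.
Open Scope R_scope.
From Stdlib Require Import Reals ZArith List Lra Lia.
From Stdlib Require Import FunctionalExtensionality PropExtensionality Classical.
Open Scope R_scope.

Lemma rpow_ge0 x q : 0 <= rpow x q.
Proof. unfold rpow; destruct (Rlt_dec 0 x). unfold Rpower; left; apply exp_pos. lra. Qed.

Lemma rpow_pos x q : 0 < x -> rpow x q = Rpower x q.
Proof. intro H; unfold rpow; destruct (Rlt_dec 0 x); [reflexivity|lra]. Qed.

Lemma rpow_pos_lt x q : 0 < x -> 0 < rpow x q.
Proof. intro H; rewrite rpow_pos by lra; unfold Rpower; apply exp_pos. Qed.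

Lemma rpow_nonpos x q : x <= 0 -> rpow x q = 0.
Proof. intro H; unfold rpow; destruct (Rlt_dec 0 x); [lra|reflexivity]. Qed.

Lemma rpow_mono x y q : 0 <= q -> 0 <= x <= y -> rpow x q <= rpow y q.
Proof.
  intros Hq [Hx Hy]. destruct (Req_dec x 0) as [->|Hx0].
  rewrite rpow_nonpos by lra; apply rpow_ge0.
  rewrite !rpow_pos by lra. apply Rle_Rpower_l; lra.
Qed.

Lemma rpow_lt x y q : 0 < q -> 0 <= x < y -> rpow x q < rpow y q.
Proof.
  intros Hq [Hx Hy]. destruct (Req_dec x 0) as [->|Hx0].
  rewrite rpow_nonpos by lra; apply rpow_pos_lt; lra.
  rewrite !rpow_pos by lra. apply Rlt_Rpower_l; lra.
Qed.

Lemma rpow_mul x y q : 0 <= x -> 0 <= y -> rpow (x*y) q = rpow x q * rpow y q.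
Proof.
  intros Hx Hy. destruct (Req_dec x 0) as [->|Hx0].
  rewrite Rmult_0_l, rpow_nonpos by lra; lra.
  destruct (Req_dec y 0) as [->|Hy0].
  rewrite Rmult_0_r, (rpow_nonpos 0) by lra; lra.
  assert (0 < x) by (destruct Hx; [lra|congruence]). assert (0 < y) by (destruct Hy; [lra|congruence]).
  assert (0 < x*y) by (apply Rmult_lt_0_compat; lra).
  rewrite !rpow_pos by lra. symmetry; apply Rpower_mult_distr; lra.
Qed.

Lemma rpow_rpow x q r : rpow (rpow x q) r = rpow x (q*r).
Proof.
  destruct (Rlt_dec 0 x).
  rewrite (rpow_pos x q) by lra. rewrite (rpow_pos x (q*r)) by lra. rewrite rpow_pos.
  apply Rpower_mult. unfold Rpower; apply exp_pos.
  rewrite (rpow_nonpos x q), !rpow_nonpos by lra; reflexivity.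
Qed.

Lemma rpow_1 x : 0 <= x -> rpow x 1 = x.
Proof.
  intro H; destruct (Req_dec x 0) as [->|]. apply rpow_nonpos; lra.
  rewrite rpow_pos by lra; apply Rpower_1; lra.
Qed.

Lemma Rpower_1_l r : Rpower 1 r = 1.
Proof. unfold Rpower; rewrite ln_1, Rmult_0_r; apply exp_0. Qed.

Lemma bernoulli z r : 1 <= r -> 0 <= z -> 1 + r * (z - 1) <= rpow z r.
Proof.
  intros Hr Hz.
  set (f := fun x => Rpower x r - r * x).
  assert (Hd : forall c, 0 < c -> derivable_pt_lim f c (r * Rpower c (r - 1) - r * 1)).
  { intros c Hc. unfold f.
    apply (derivable_pt_lim_minus (fun x => Rpower x r) (fun x => r * x)).
    apply derivable_pt_lim_power; lra.
    apply (derivable_pt_lim_scal id r c 1). apply derivable_pt_lim_id. }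
  destruct (Req_dec z 0) as [->|Hz0].
  { rewrite rpow_nonpos by lra. lra. }
  assert (0 < z) by (destruct Hz; [lra|congruence]).
  rewrite rpow_pos by lra.
  destruct (Rtotal_order z 1) as [Hlt|[Heq|Hgt]].
  - destruct (MVT_cor2 f (fun c => r * Rpower c (r - 1) - r * 1) z 1 Hlt) as [c [Hc1 Hc2]].
    { intros c Hc; apply Hd; lra. }
    assert (Rpower c (r-1) <= 1).
    { pose proof (Rle_Rpower_l c 1 (r-1)) as HH. rewrite Rpower_1_l in HH. apply HH; lra. }
    unfold f in Hc1. rewrite Rpower_1_l in Hc1.
    assert (0 <= (1 - Rpower c (r-1))*(1-z)) by (apply Rmult_le_pos; lra). nra.
  - subst. rewrite Rpower_1_l; lra.
  - destruct (MVT_cor2 f (fun c => r * Rpower c (r - 1) - r * 1) 1 z Hgt) as [c [Hc1 Hc2]].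
    { intros c Hc; apply Hd; lra. }
    assert (1 <= Rpower c (r-1)).
    { pose proof (Rle_Rpower c 0 (r-1)) as HH. rewrite Rpower_O in HH by lra. apply HH; lra. }
    unfold f in Hc1. rewrite Rpower_1_l in Hc1.
    assert (0 <= (Rpower c (r-1) - 1)*(z-1)) by (apply Rmult_le_pos; lra). nra.
Qed.

Lemma tangent y a r : 1 <= r -> 0 < y -> 0 <= a ->
  rpow y r + r * rpow y r * ((a - y) / y) <= rpow a r.
Proof.
  intros Hr Hy Ha.
  pose proof (bernoulli (a / y) r Hr) as B.
  assert (0 <= a / y) by (unfold Rdiv; apply Rmult_le_pos; [lra|left; apply Rinv_0_lt_compat; lra]).
  specialize (B H).
  assert (E : rpow a r = rpow (a/y) r * rpow y r).
  { rewrite <- rpow_mul by lra. f_equal. field; lra. }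
  rewrite E.
  pose proof (rpow_pos_lt y r Hy).
  replace ((a - y) / y) with (a / y - 1) by (field; lra).
  nra.
Qed.

Definition sumL {X} (g : X -> R) (L : list X) : R :=
  fold_right (fun x acc => g x + acc) 0 L.

Lemma sumL_nil {X} (g : X -> R) : sumL g nil = 0.
Proof. reflexivity. Qed.
Lemma sumL_cons {X} (g : X -> R) x L : sumL g (x :: L) = g x + sumL g L.
Proof. reflexivity. Qed.

Lemma sumL_plus {X} (f g : X -> R) L : sumL (fun x => f x + g x) L = sumL f L + sumL g L.
Proof. induction L; simpl; [lra| rewrite IHL; lra]. Qed.
Lemma sumL_scal {X} (f : X -> R) c L : sumL (fun x => c * f x) L = c * sumL f L.
Proof. induction L; simpl; [lra| rewrite IHL; lra]. Qed.
Lemma sumL_le {X} (f g : X -> R) L : (forall x, In x L -> f x <= g x) -> sumL f L <= sumL g L.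
Proof. induction L; simpl; intros H; [lra|]. pose proof (H a (or_introl eq_refl)).
  assert (sumL f L <= sumL g L) by (apply IHL; auto). lra. Qed.
Lemma sumL_ge0 {X} (f : X -> R) L : (forall x, In x L -> 0 <= f x) -> 0 <= sumL f L.
Proof. intro H. replace 0 with (sumL (fun _ => 0) L). apply sumL_le; auto.
  induction L; simpl; auto. rewrite IHL; [lra|]. intros; apply H; simpl; auto. Qed.
Lemma sumL_ext {X} (f g : X -> R) L : (forall x, In x L -> f x = g x) -> sumL f L = sumL g L.
Proof. intro H; apply Rle_antisym; apply sumL_le; intros x Hx; rewrite H; auto; lra. Qed.
Lemma sumL_flat_map {X Y} (g : Y -> R) (F : X -> list Y) L :
  sumL g (flat_map F L) = sumL (fun x => sumL g (F x)) L.
Proof. induction L; simpl; auto. rewrite <- IHL. generalize (F a); intro l.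
  induction l; simpl; [lra| rewrite IHl; lra]. Qed.
Lemma sumL_one {X} (L : list X) : sumL (fun _ => 1) L = INR (length L).
Proof. induction L; simpl; auto. rewrite IHL. destruct (length L); simpl; lra. Qed.
Lemma sumL_zero {X} (c a : X -> R) L : (forall x, In x L -> 0 <= c x) -> sumL c L = 0 ->
  sumL (fun x => c x * a x) L = 0.
Proof. induction L; simpl; intros H1 H2; auto.
  assert (0 <= c a0) by auto. assert (0 <= sumL c L) by (apply sumL_ge0; auto).
  assert (c a0 = 0) by lra. rewrite H3, IHL; auto; lra. Qed.

Lemma jensenL {X} (c a : X -> R) r L : 1 <= r ->
  (forall x, In x L -> 0 <= c x) -> (forall x, In x L -> 0 <= a x) ->
  sumL c L * rpow (sumL (fun x => c x * a x) L) r
  <= rpow (sumL c L) r * sumL (fun x => c x * rpow (a x) r) L.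
Proof.
  intros Hr Hc Ha.
  set (P := sumL c L). set (Q := sumL (fun x => c x * a x) L).
  assert (HP : 0 <= P) by (apply sumL_ge0; auto).
  assert (HQ : 0 <= Q) by (apply sumL_ge0; intros; apply Rmult_le_pos; auto).
  assert (HR : 0 <= sumL (fun x => c x * rpow (a x) r) L)
    by (apply sumL_ge0; intros; apply Rmult_le_pos; auto; apply rpow_ge0).
  destruct (Req_dec P 0) as [HP0|HP0].
  { rewrite HP0, Rmult_0_l. apply Rmult_le_pos; auto; apply rpow_ge0. }
  destruct (Req_dec Q 0) as [HQ0|HQ0].
  { rewrite HQ0, rpow_nonpos by lra. rewrite Rmult_0_r. apply Rmult_le_pos; auto; apply rpow_ge0. }
  set (y := Q / P). assert (Hy : 0 < y) by (apply Rdiv_lt_0_compat; lra).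
  set (Y := rpow y r).
  assert (H1 : sumL (fun x => c x * (Y + r * Y * ((a x - y) / y))) L
               <= sumL (fun x => c x * rpow (a x) r) L).
  { apply sumL_le; intros x Hx. apply Rmult_le_compat_l; auto. apply tangent; auto. }
  assert (H2 : sumL (fun x => c x * (Y + r * Y * ((a x - y) / y))) L = P * Y).
  { rewrite (sumL_ext _ (fun x => (Y - r * Y) * c x + (r * Y / y) * (c x * a x))).
    rewrite sumL_plus, !sumL_scal. fold P Q. unfold y. field. split; lra.
    intros x _. field. lra. }
  assert (HQe : Q = P * y) by (unfold y; field; lra).
  rewrite HQe, rpow_mul by lra. fold Y.
  assert (0 <= rpow P r) by apply rpow_ge0. nra.
Qed.
Lemma fsum_S f n : fsum f (S n) = fsum f n + f n.
Proof. reflexivity. Qed.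
Lemma fsum_plus f g n : fsum (fun i => f i + g i) n = fsum f n + fsum g n.
Proof. induction n; simpl; [lra| rewrite IHn; lra]. Qed.
Lemma fsum_scal f c n : fsum (fun i => c * f i) n = c * fsum f n.
Proof. induction n; simpl; [lra| rewrite IHn; lra]. Qed.
Lemma fsum_le f g n : (forall i, (i < n)%nat -> f i <= g i) -> fsum f n <= fsum g n.
Proof. induction n; simpl; intro H; [lra|].
  assert (fsum f n <= fsum g n) by (apply IHn; intros; apply H; lia).
  assert (f n <= g n) by (apply H; lia). lra. Qed.
Lemma fsum_ext f g n : (forall i, (i < n)%nat -> f i = g i) -> fsum f n = fsum g n.
Proof. intro H; apply Rle_antisym; apply fsum_le; intros i Hi; rewrite H; auto; lra. Qed.
Lemma fsum_ge0 f n : (forall i, (i < n)%nat -> 0 <= f i) -> 0 <= fsum f n.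
Proof. intro H. replace 0 with (fsum (fun _ => 0) n). apply fsum_le; auto.
  clear H; induction n; simpl; auto. rewrite IHn; lra. Qed.
Lemma fsum_swap (F : nat -> nat -> R) N M :
  fsum (fun r => fsum (fun i => F r i) N) M = fsum (fun i => fsum (fun r => F r i) M) N.
Proof. induction M; simpl. induction N; simpl; auto; rewrite <- IHN; lra.
  rewrite IHM, <- fsum_plus. reflexivity. Qed.
Lemma sumL_fsum_swap {X} (F : X -> nat -> R) L N :
  sumL (fun x => fsum (F x) N) L = fsum (fun r => sumL (fun x => F x r) L) N.
Proof. induction L; simpl. induction N; simpl; auto; rewrite <- IHN; lra.
  rewrite IHL, <- fsum_plus. reflexivity. Qed.
Lemma fsum_one f n a : (forall i, (i < n)%nat -> 0 <= f i) -> (a < n)%nat -> f a <= fsum f n.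
Proof. induction n; intros H Ha; [lia|]. simpl.
  destruct (Nat.eq_dec a n) as [->|].
  assert (0 <= fsum f n) by (apply fsum_ge0; intros; apply H; lia). lra.
  assert (f a <= fsum f n) by (apply IHn; [intros; apply H|]; lia).
  assert (0 <= f n) by (apply H; lia). lra. Qed.
Lemma fsum_two f n a b : (forall i, (i < n)%nat -> 0 <= f i) -> (a < n)%nat -> (b < n)%nat -> a <> b ->
  f a + f b <= fsum f n.
Proof. induction n; intros H Ha Hb Hab; [lia|]. simpl.
  destruct (Nat.eq_dec a n) as [->|].
  assert (f b <= fsum f n) by (apply fsum_one; [intros; apply H|]; lia). lra.
  destruct (Nat.eq_dec b n) as [->|].
  assert (f a <= fsum f n) by (apply fsum_one; [intros; apply H|]; lia). lra.
  assert (f a + f b <= fsum f n) by (apply IHn; [intros; apply H|..]; lia).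
  assert (0 <= f n) by (apply H; lia). lra. Qed.

Lemma rpow_le_self t q : 1 <= q -> 0 <= t <= 1 -> rpow t q <= t.
Proof. intros Hq [H0 H1]. destruct (Req_dec t 0) as [->|Ht]. rewrite rpow_nonpos; lra.
  assert (0 < t) by (destruct H0; [lra|congruence]).
  rewrite rpow_pos by lra. unfold Rpower.
  assert (ln t <= 0).
  { destruct (Req_dec t 1) as [->|]. rewrite ln_1; lra. rewrite <- ln_1; left; apply ln_increasing; lra. }
  rewrite <- (exp_ln t) at 2 by lra.
  destruct (Req_dec (q * ln t) (ln t)) as [E|E]. rewrite E; lra.
  left; apply exp_increasing. nra. Qed.

Lemma rpow_superadd a b q : 1 <= q -> 0 <= a -> 0 <= b -> rpow a q + rpow b q <= rpow (a + b) q.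
Proof. intros Hq Ha Hb. destruct (Req_dec (a+b) 0) as [E|E].
  assert (a = 0) by lra; assert (b = 0) by lra; subst. rewrite !rpow_nonpos; lra.
  assert (Hs : 0 < a + b) by lra.
  assert (Ea : rpow a q = rpow (a/(a+b)) q * rpow (a+b) q).
  { rewrite <- rpow_mul; [f_equal; field; lra | apply Rmult_le_pos; [lra|left; apply Rinv_0_lt_compat; lra] | lra]. }
  assert (Eb : rpow b q = rpow (b/(a+b)) q * rpow (a+b) q).
  { rewrite <- rpow_mul; [f_equal; field; lra | apply Rmult_le_pos; [lra|left; apply Rinv_0_lt_compat; lra] | lra]. }
  assert (rpow (a/(a+b)) q <= a/(a+b)).
  { apply rpow_le_self; auto. split. apply Rmult_le_pos; [lra|left; apply Rinv_0_lt_compat; lra].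
    apply Rmult_le_reg_r with (a+b); auto. field_simplify; lra. }
  assert (rpow (b/(a+b)) q <= b/(a+b)).
  { apply rpow_le_self; auto. split. apply Rmult_le_pos; [lra|left; apply Rinv_0_lt_compat; lra].
    apply Rmult_le_reg_r with (a+b); auto. field_simplify; lra. }
  pose proof (rpow_ge0 (a+b) q).
  rewrite Ea, Eb.
  assert (a/(a+b) + b/(a+b) = 1) by (field; lra). nra. Qed.

Lemma fsum_superadd f n q : 1 <= q -> (forall i, (i < n)%nat -> 0 <= f i) ->
  fsum (fun i => rpow (f i) q) n <= rpow (fsum f n) q.
Proof. intros Hq; induction n; intro H; simpl.
  rewrite rpow_nonpos; lra.
  assert (fsum (fun i => rpow (f i) q) n <= rpow (fsum f n) q) by (apply IHn; intros; apply H; lia).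
  assert (rpow (fsum f n) q + rpow (f n) q <= rpow (fsum f n + f n) q).
  { apply rpow_superadd; [auto| |]. apply fsum_ge0; intros; apply H; lia. apply H; lia. }
  lra. Qed.

Lemma rpow_sum2 a b q : 0 < q -> 0 <= a -> 0 <= b ->
  rpow (a + b) q <= rpow 2 q * (rpow a q + rpow b q).
Proof. intros Hq Ha Hb.
  assert (H : forall x y, 0 <= x -> 0 <= y -> y <= x -> rpow (x+y) q <= rpow 2 q * (rpow x q + rpow y q)).
  { intros x y Hx Hy Hxy. apply Rle_trans with (rpow (2*x) q).
    apply rpow_mono; lra. rewrite rpow_mul by lra.
    pose proof (rpow_ge0 y q). pose proof (rpow_ge0 2 q). nra. }
  destruct (Rle_dec b a). apply H; lra. rewrite Rplus_comm, (Rplus_comm (rpow a q)). apply H; lra. Qed.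
Lemma set_ext (A B : R -> Prop) : (forall x, A x <-> B x) -> A = B.
Proof. intro H; apply functional_extensionality; intro x; apply propositional_extensionality; auto. Qed.

Lemma borel_ext A B : borel A -> (forall x, A x <-> B x) -> borel B.
Proof. intros H E; rewrite <- (set_ext A B E); auto. Qed.

Lemma borel_empty : borel (fun _ => False).
Proof. apply borel_ext with (fun x => 0 < x < 0). constructor. intros; split; [lra|tauto]. Qed.

Lemma borel_prop (P : Prop) A : borel A -> borel (fun x => P /\ A x).
Proof. intro H. destruct (classic P).
  apply borel_ext with A; auto; intros; tauto.
  apply borel_ext with (fun _ => False); [apply borel_empty|]; intros; tauto. Qed.

Lemma borel_union2 A B : borel A -> borel B -> borel (fun x => A x \/ B x).
Proof. intros HA HB.
  apply borel_ext with (fun x => exists n, (fun n => fun x => (n = 0%nat /\ A x) \/ ((n <> 0)%nat /\ B x)) n x).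
  apply borel_cunion. intro n. destruct (Nat.eq_dec n 0).
  apply borel_ext with A; auto; intros; split; intros; [left|destruct H]; tauto.
  apply borel_ext with B; auto; intros; split; intros; [right|destruct H]; tauto.
  intro x; split. intros [n [[_ H]|[_ H]]]; tauto.
  intros [H|H]. exists 0%nat; left; auto. exists 1%nat; right; auto. Qed.

Lemma borel_inter A B : borel A -> borel B -> borel (fun x => A x /\ B x).
Proof. intros HA HB.
  apply borel_ext with (fun x => ~ (fun x => ~ A x \/ ~ B x) x).
  apply borel_compl, borel_union2; apply borel_compl; auto.
  intro x; split; intros; [|tauto]. destruct (classic (A x)), (classic (B x)); tauto. Qed.

Lemma borel_Iio b : borel (fun x => x < b).
Proof.
  apply borel_ext with (fun x => exists n, (fun n x => b - INR n - 1 < x < b) n x).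
  apply borel_cunion; intro; constructor.
  intro x; split. intros [n Hn]; lra.
  intro Hx. destruct (archimed (b - x)) as [H1 H2].
  assert (0 <= IZR (up (b - x))) by lra.
  exists (Z.to_nat (up (b - x))). rewrite INR_IZR_INZ, Z2Nat.id. lra.
  apply le_IZR; auto. Qed.

Definition Ico (a b : R) : R -> Prop := fun x => a <= x < b.

Lemma borel_Ico a b : borel (Ico a b).
Proof. apply borel_ext with (fun x => (fun x => x < b) x /\ ~ (fun x => x < a) x).
  apply borel_inter. apply borel_Iio. apply borel_compl, borel_Iio.
  unfold Ico; intro; lra. Qed.

Lemma borel_affine A : borel A -> forall a b, 0 < a -> borel (fun x => A (a * x + b)).
Proof.
  induction 1; intros a0 b0 Ha.
  - apply borel_ext with (fun x => (a - b0)/a0 < x < (b - b0)/a0). constructor.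
    intro x; split; intros [H1 H2].
    split. apply Rmult_lt_reg_r with (/a0). apply Rinv_0_lt_compat; lra.
      replace ((a0*x+b0) * /a0) with (x + b0/a0) by (field; lra). unfold Rdiv in H1.
      replace ((a - b0) * /a0) with (a * /a0 - b0/a0) in H1 by (field; lra). lra.
      apply Rmult_lt_reg_r with (/a0). apply Rinv_0_lt_compat; lra.
      replace ((a0*x+b0) * /a0) with (x + b0/a0) by (field; lra). unfold Rdiv in H2.
      replace ((b - b0) * /a0) with (b * /a0 - b0/a0) in H2 by (field; lra). lra.
    split. apply Rmult_lt_reg_r with a0; auto. unfold Rdiv; field_simplify; lra.
      apply Rmult_lt_reg_r with a0; auto. unfold Rdiv; field_simplify; lra.
  - apply (borel_compl (fun x => A (a0 * x + b0))); auto.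
  - apply (borel_cunion (fun n x => A n (a0 * x + b0))); auto.
Qed.

Lemma sum_f_R0_fsum f n : sum_f_R0 f n = fsum f (S n).
Proof. induction n; simpl; auto. lra. rewrite IHn; reflexivity. Qed.

Lemma infinite_sum_unique_ev (s : nat -> R) l C N :
  infinite_sum s l -> (forall n, (n >= N)%nat -> sum_f_R0 s n = C) -> l = C.
Proof. intros Hs HC. destruct (Req_dec l C) as [|Hne]; auto.
  destruct (Hs (Rabs (l - C))) as [N1 HN1]. apply Rabs_pos_lt; lra.
  specialize (HN1 (max N N1) (Nat.le_max_r _ _)). rewrite HC in HN1 by lia.
  unfold R_dist in HN1. rewrite Rabs_minus_sym in HN1. lra. Qed.

Lemma mu_ext (mu : (R -> Prop) -> R) (A B : R -> Prop) : (forall x, A x <-> B x) -> mu A = mu B.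
Proof. intro H; rewrite (set_ext A B H); auto. Qed.

Lemma mu_empty mu : is_prob_measure mu -> mu (fun _ => False) = 0.
Proof. intro Hm.
  pose proof (pm_sigma_add mu Hm (fun _ _ => False) (fun _ => borel_empty)) as H.
  assert (H' : infinite_sum (fun _ => mu (fun _ => False)) (mu (fun _ => False))).
  { cbv beta in H. rewrite (mu_ext mu (fun x => exists n:nat, False) (fun _ => False)) in H.
    apply H. intros; auto. intro x; split; [intros [_ []]|tauto]. }
  set (e := mu (fun _ => False)) in *.
  assert (Hsum : forall n, sum_f_R0 (fun _ => e) n = INR (S n) * e).
  { induction n; simpl; auto. lra. rewrite IHn. destruct n; simpl; lra. }
  destruct (Req_dec e 0) as [|He]; auto.
  assert (0 < Rabs e) by (apply Rabs_pos_lt; auto).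
  destruct (H' (Rabs e / 2)) as [N HN]. lra.
  specialize (HN (S N) (le_S _ _ (le_n _))). unfold R_dist in HN. rewrite Hsum in HN.
  replace (INR (S (S N)) * e - e) with (INR (S N) * e) in HN by (rewrite (S_INR (S N)); lra).
  rewrite Rabs_mult, Rabs_pos_eq in HN by (apply pos_INR).
  assert (1 <= INR (S N)) by (rewrite S_INR; pose proof (pos_INR N); lra).
  assert (0 < Rabs e) by (apply Rabs_pos_lt; auto). nra. Qed.

Lemma fsum_tail f N n : (forall k, (k >= N)%nat -> f k = 0) -> (n >= N)%nat -> fsum f n = fsum f N.
Proof. intros H. induction n; intro Hn. replace N with 0%nat by lia; auto.
  destruct (Nat.eq_dec (S n) N) as [<-|]; auto. simpl. rewrite IHn, H by lia. lra. Qed.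

Lemma mu_fin_add mu (B : nat -> R -> Prop) N : is_prob_measure mu ->
  (forall r, borel (B r)) ->
  (forall r r' x, (r < N)%nat -> (r' < N)%nat -> r <> r' -> B r x -> B r' x -> False) ->
  mu (fun x => exists r, (r < N)%nat /\ B r x) = fsum (fun r => mu (B r)) N.
Proof. intros Hm HB Hd.
  pose proof (pm_sigma_add mu Hm (fun n x => (n < N)%nat /\ B n x)) as H.
  assert (H1 : infinite_sum (fun n => mu (fun x => (n < N)%nat /\ B n x))
     (mu (fun x => exists n, (n < N)%nat /\ B n x))).
  { apply H. intro n; apply borel_prop; auto. intros n k x Hnk [] []; eauto. }
  apply (infinite_sum_unique_ev _ _ _ N H1). intros n Hn. rewrite sum_f_R0_fsum.
  rewrite (fsum_tail _ N) by (try lia; intros k Hk; rewrite (mu_ext mu _ (fun _ => False)), mu_empty; auto; intro; lia).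
  apply fsum_ext. intros i Hi. apply mu_ext. intro; tauto. Qed.

Lemma mu_add2 mu A B : is_prob_measure mu -> borel A -> borel B -> (forall x, A x -> B x -> False) ->
  mu (fun x => A x \/ B x) = mu A + mu B.
Proof. intros Hm HA HB Hd.
  pose proof (mu_fin_add mu (fun r => if Nat.eq_dec r 0 then A else B) 2 Hm) as H.
  rewrite (mu_ext mu _ (fun x => exists r, (r < 2)%nat /\ (if Nat.eq_dec r 0 then A else B) x)).
  rewrite H. simpl; lra.
  intro r; destruct (Nat.eq_dec r 0); auto.
  intros r r' x Hr Hr' Hne. destruct (Nat.eq_dec r 0), (Nat.eq_dec r' 0); try lia; eauto.
  intro x; split.
  intros [Hx|Hx]. exists 0%nat; simpl; split; auto. exists 1%nat; simpl; split; auto.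
  intros [r [Hr Hx]]. destruct (Nat.eq_dec r 0); auto. Qed.

Lemma mu_mono mu A B : is_prob_measure mu -> borel A -> borel B -> (forall x, A x -> B x) -> mu A <= mu B.
Proof. intros Hm HA HB Hs.
  rewrite (mu_ext mu B (fun x => A x \/ (B x /\ ~ A x))).
  rewrite mu_add2; auto. pose proof (pm_nonneg mu Hm (fun x => B x /\ ~ A x)).
  assert (0 <= mu (fun x => B x /\ ~ A x)) by (apply H, borel_inter; auto; apply borel_compl; auto). lra.
  apply borel_inter; auto; apply borel_compl; auto. intros x ? []; auto.
  intro x; split. intro; destruct (classic (A x)); tauto. intros [|[]]; auto. Qed.

Lemma mu_subadd mu A B C : is_prob_measure mu -> borel A -> borel B -> borel C ->
  (forall x, A x -> B x \/ C x) -> mu A <= mu B + mu C.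
Proof. intros Hm HA HB HC Hs.
  apply Rle_trans with (mu (fun x => B x \/ (C x /\ ~ B x))).
  apply mu_mono; auto. apply borel_union2; auto; apply borel_inter; auto; apply borel_compl; auto.
  intros x Hx; destruct (Hs x Hx); [left|]; auto; destruct (classic (B x)); tauto.
  rewrite mu_add2; auto. 2: apply borel_inter; auto; apply borel_compl; auto. 2: intros x ? []; auto.
  assert (mu (fun x => C x /\ ~ B x) <= mu C). apply mu_mono; auto.
  apply borel_inter; auto; apply borel_compl; auto. intros x []; auto. lra. Qed.

Lemma mu_outside mu A : is_prob_measure mu -> mu (fun x => 0 <= x < 1) = 1 -> borel A ->
  (forall x, A x -> ~ (0 <= x < 1)) -> mu A = 0.
Proof. intros Hm H1 HA Hs.
  assert (E : mu (fun _ => True) = mu (fun x => 0 <= x < 1) + mu (fun x => ~ (0 <= x < 1))).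
  { rewrite <- mu_add2; [ | exact Hm | apply (borel_Ico 0 1) | apply borel_compl, (borel_Ico 0 1) | intros x ? ?; auto].
    apply mu_ext; intro x; split; auto. intros _; apply classic. }
  rewrite (pm_total mu Hm), H1 in E.
  assert (mu A <= mu (fun x => ~ (0 <= x < 1))). apply mu_mono; auto. apply borel_compl, (borel_Ico 0 1).
  pose proof (pm_nonneg mu Hm A HA). lra. Qed.
Lemma sumL_app {X} (g : X -> R) L1 L2 : sumL g (L1 ++ L2) = sumL g L1 + sumL g L2.
Proof. induction L1; simpl; [lra|rewrite IHL1; lra]. Qed.

Lemma sumL_map_seq {X} (g : X -> R) (f : nat -> X) n :
  sumL g (map f (seq 0 n)) = fsum (fun i => g (f i)) n.
Proof. induction n; auto. rewrite seq_S, map_app, sumL_app, IHn. simpl. lra. Qed.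

Lemma iterate n lam t p mu : 0 < lam -> (forall i, (i < n)%nat -> 0 < p i) ->
  wifs_invariant n lam t p mu ->
  forall k, exists L : list (R * R), (forall x, In x L -> 0 <= fst x) /\
    forall A, borel A -> mu A = sumL (fun x => fst x * mu (fun y => A (lam ^ k * y + snd x))) L.
Proof.
  intros Hl Hp Hinv. induction k.
  - exists ((1,0)::nil). split. intros x [<-|[]]; simpl; lra.
    intros A HA. simpl. rewrite (mu_ext mu (fun y => A (1 * y + 0)) A). lra.
    intro y; replace (1*y+0) with y by ring; tauto.
  - destruct IHk as [L [HL1 HL2]].
    exists (flat_map (fun x => map (fun i => (fst x * p i, lam ^ k * t i + snd x)) (seq 0 n)) L).
    split.
    + intros x Hx. apply in_flat_map in Hx. destruct Hx as [y [Hy Hx]].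
      apply in_map_iff in Hx. destruct Hx as [i [<- Hi]]. apply in_seq in Hi. simpl.
      apply Rmult_le_pos; auto. left; apply Hp; lia.
    + intros A HA. rewrite HL2 by auto. rewrite sumL_flat_map. apply sumL_ext. intros x Hx.
      rewrite sumL_map_seq. simpl.
      rewrite (Hinv (fun y => A (lam ^ k * y + snd x))).
      rewrite <- fsum_scal. apply fsum_ext. intros i Hi.
      rewrite (mu_ext mu (fun x0 => A (lam ^ k * (lam * x0 + t i) + snd x))
                        (fun y => A (lam * lam ^ k * y + (lam ^ k * t i + snd x)))). ring.
      intro y. replace (lam ^ k * (lam * y + t i) + snd x) with (lam * lam ^ k * y + (lam ^ k * t i + snd x)) by ring. tauto.
      apply borel_affine; auto. apply pow_lt; auto.
Qed.
Lemma gsum_two (g : Z -> R) N z : (forall w, 0 <= g w) ->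
  (forall w, (w < 0)%Z \/ (Z.of_nat N <= w)%Z -> g w = 0) -> (1 <= N)%nat ->
  g z + g (z + 1)%Z <= fsum (fun i => g (Z.of_nat i)) N.
Proof.
  intros Hg H0 HN.
  assert (Hs : 0 <= fsum (fun i => g (Z.of_nat i)) N) by (apply fsum_ge0; auto).
  assert (Hone : forall w, (0 <= w < Z.of_nat N)%Z -> g w <= fsum (fun i => g (Z.of_nat i)) N).
  { intros w Hw. replace w with (Z.of_nat (Z.to_nat w)) by lia.
    apply (fsum_one (fun i => g (Z.of_nat i))); auto. lia. }
  destruct (Z_lt_le_dec z 0).
  - rewrite (H0 z) by lia. destruct (Z_lt_le_dec (z+1) 0).
    rewrite (H0 (z+1)%Z) by lia; lra.
    assert (g (z+1)%Z <= fsum (fun i => g (Z.of_nat i)) N) by (apply Hone; lia). lra.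
  - destruct (Z_lt_le_dec z (Z.of_nat N)).
    + destruct (Z_lt_le_dec (z+1) (Z.of_nat N)).
      * replace z with (Z.of_nat (Z.to_nat z)) by lia.
        replace (Z.of_nat (Z.to_nat z) + 1)%Z with (Z.of_nat (S (Z.to_nat z))) by lia.
        apply (fsum_two (fun i => g (Z.of_nat i))); auto; lia.
      * rewrite (H0 (z+1)%Z) by lia. assert (g z <= fsum (fun i => g (Z.of_nat i)) N) by (apply Hone; lia). lra.
    + rewrite (H0 z), (H0 (z+1)%Z) by lia. lra.
Qed.

Lemma floor_exists a : exists z : Z, IZR z <= a < IZR z + 1.
Proof. destruct (archimed a) as [H1 H2]. exists (up a - 1)%Z. rewrite minus_IZR. lra. Qed.

Lemma pow2_pos m : 0 < 2 ^ m.
Proof. apply pow_lt; lra. Qed.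

Lemma dyad_out mu m w : is_prob_measure mu -> mu (fun x => 0 <= x < 1) = 1 ->
  (w < 0 \/ Z.of_nat (2 ^ m) <= w)%Z ->
  forall B, borel B -> mu (fun x => B x /\ dyad m w x) = 0.
Proof.
  intros Hm H1 Hw B HB. apply mu_outside; auto. apply borel_inter; auto. apply borel_Ico.
  intros x [_ [Hx1 Hx2]] [Hx3 Hx4]. pose proof (pow2_pos m).
  destruct Hw as [Hw|Hw].
  - apply IZR_lt in Hw. assert (IZR w + 1 <= 0). { assert (IZR w <= -1). apply IZR_le. apply lt_IZR in Hw. lia. lra. }
    assert ((IZR w + 1) / 2 ^ m <= 0). { apply Rmult_le_reg_r with (2^m); auto. unfold Rdiv; rewrite Rmult_assoc, Rinv_l, Rmult_1_r, Rmult_0_l by lra. lra. } lra.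
  - apply IZR_le in Hw. rewrite <- INR_IZR_INZ, pow_INR in Hw. replace (INR 2) with 2 in Hw by (simpl; lra).
    assert (1 <= IZR w / 2 ^ m). { apply Rmult_le_reg_r with (2^m); auto. unfold Rdiv; rewrite Rmult_assoc, Rinv_l by lra. lra. }
    lra.
Qed.
Lemma pow2_nat_ge1 m : (1 <= 2 ^ m)%nat.
Proof. induction m; simpl; lia. Qed.

Lemma div_le_iff y x h : 0 < h -> (y / h <= x <-> y <= x * h).
Proof. intro Hh; split; intro H.
  apply Rmult_le_reg_r with (/h). apply Rinv_0_lt_compat; auto.
  rewrite Rmult_assoc, Rinv_r, Rmult_1_r by lra. exact H.
  apply Rmult_le_reg_r with h; auto. unfold Rdiv; rewrite Rmult_assoc, Rinv_l, Rmult_1_r by lra. exact H. Qed.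
Lemma div_lt_iff y x h : 0 < h -> (x < y / h <-> x * h < y).
Proof. intro Hh; split; intro H.
  apply Rmult_lt_reg_r with (/h). apply Rinv_0_lt_compat; auto.
  rewrite Rmult_assoc, Rinv_r, Rmult_1_r by lra. exact H.
  apply Rmult_lt_reg_r with h; auto. unfold Rdiv; rewrite Rmult_assoc, Rinv_l, Rmult_1_r by lra. exact H. Qed.

Lemma cover2 mu q m' a B : is_prob_measure mu -> mu (fun x => 0 <= x < 1) = 1 -> 0 < q ->
  borel B -> (forall x, B x -> a <= x < a + / 2 ^ m') ->
  rpow (mu B) q <= rpow 2 q * fsum (fun i => rpow (mu (fun x => B x /\ dyad m' (Z.of_nat i) x)) q) (2 ^ m').
Proof.
  intros Hm H1 Hq HB HBa.
  pose proof (pow2_pos m') as Hh. set (h := 2 ^ m') in *.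
  destruct (floor_exists (a * h)) as [z [Hz1 Hz2]].
  assert (Hcov : forall x, B x -> dyad m' z x \/ dyad m' (z + 1)%Z x).
  { intros x Hx. destruct (HBa x Hx) as [Hx1 Hx2]. unfold dyad. fold h. rewrite plus_IZR.
    assert (IZR z / h <= x). { apply div_le_iff; auto. nra. }
    assert (x * h < (a + / h) * h) by (apply Rmult_lt_compat_r; auto).
    replace ((a + / h) * h) with (a * h + 1) in H0 by (field; lra).
    destruct (Rlt_dec x ((IZR z + 1) / h)).
    left; lra. right. split. lra. apply div_lt_iff; auto. lra. }
  assert (Hsub : mu B <= mu (fun x => B x /\ dyad m' z x) + mu (fun x => B x /\ dyad m' (z+1)%Z x)).
  { apply mu_subadd; auto; try (apply borel_inter; auto; apply borel_Ico).
    intros x Hx; destruct (Hcov x Hx); auto. }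
  set (g := fun w => rpow (mu (fun x => B x /\ dyad m' w x)) q).
  assert (Hnn : forall w, 0 <= mu (fun x => B x /\ dyad m' w x)).
  { intro w; apply (pm_nonneg mu Hm); apply borel_inter; auto; apply borel_Ico. }
  apply Rle_trans with (rpow (mu (fun x => B x /\ dyad m' z x) + mu (fun x => B x /\ dyad m' (z+1)%Z x)) q).
  apply rpow_mono; [lra|split; auto; apply (pm_nonneg mu Hm); auto].
  apply Rle_trans with (rpow 2 q * (g z + g (z+1)%Z)).
  apply rpow_sum2; auto.
  apply Rmult_le_compat_l. apply rpow_ge0.
  apply (gsum_two g). intro; apply rpow_ge0.
  intros w Hw. unfold g. rewrite dyad_out; auto. apply rpow_nonpos; lra.
  apply pow2_nat_ge1.
Qed.
Lemma dyad_disj m w1 w2 x : dyad m w1 x -> dyad m w2 x -> w1 = w2.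
Proof. unfold dyad; intros [A1 A2] [B1 B2]. pose proof (pow2_pos m) as Hh.
  apply div_le_iff in A1; auto. apply div_le_iff in B1; auto.
  assert (x * 2^m < IZR w1 + 1) by (apply div_lt_iff; auto).
  assert (x * 2^m < IZR w2 + 1) by (apply div_lt_iff; auto).
  assert (IZR w1 < IZR (w2 + 1)) by (rewrite plus_IZR; lra).
  assert (IZR w2 < IZR (w1 + 1)) by (rewrite plus_IZR; lra).
  apply lt_IZR in H1. apply lt_IZR in H2. lia. Qed.

Lemma preimage_sum mu q s m m' (e : nat -> Z) K u :
  is_prob_measure mu -> mu (fun x => 0 <= x < 1) = 1 -> 1 <= q -> 0 < K ->
  (forall r1 r2, e r1 = e r2 -> r1 = r2) ->
  / (2 ^ (s + m) * K) <= / 2 ^ m' ->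
  fsum (fun r => rpow (mu (fun y => dyad (s + m) (e r) (K * y + u))) q) (2 ^ m)
  <= rpow 2 q * moment_sum mu q m'.
Proof.
  intros Hm H1 Hq HK He HKm.
  set (P := fun r y => dyad (s + m) (e r) (K * y + u)).
  set (Li := fun i => dyad m' (Z.of_nat i)).
  assert (HPb : forall r, borel (P r)). { intro r. apply (borel_affine (dyad (s+m) (e r))); auto. apply borel_Ico. }
  assert (HLb : forall i, borel (Li i)) by (intro; apply borel_Ico).
  pose proof (pow2_pos (s+m)) as HH.
  apply Rle_trans with (fsum (fun r => rpow 2 q * fsum (fun i => rpow (mu (fun x => P r x /\ Li i x)) q) (2 ^ m')) (2 ^ m)).
  { apply fsum_le; intros r Hr. fold (P r).
    apply (cover2 mu q m' ((IZR (e r) / 2 ^ (s+m) - u) / K)); auto. lra.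
    intros y Hy. unfold P, dyad in Hy. destruct Hy as [Hy1 Hy2].
    split. apply div_le_iff; auto. lra.
    assert (y < (IZR (e r) / 2 ^ (s + m) - u) / K + / (2 ^ (s + m) * K)).
    { apply Rmult_lt_reg_r with K; auto.
      replace (((IZR (e r) / 2 ^ (s + m) - u) / K + / (2 ^ (s + m) * K)) * K)
        with ((IZR (e r) + 1) / 2 ^ (s + m) - u) by (field; lra). lra. }
    lra. }
  rewrite fsum_scal. apply Rmult_le_compat_l. apply rpow_ge0.
  rewrite fsum_swap. unfold moment_sum. apply fsum_le. intros i Hi.
  apply Rle_trans with (rpow (fsum (fun r => mu (fun x => P r x /\ Li i x)) (2 ^ m)) q).
  apply fsum_superadd; auto. intros; apply (pm_nonneg mu Hm), borel_inter; auto.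
  apply rpow_mono. lra. split. apply fsum_ge0; intros; apply (pm_nonneg mu Hm), borel_inter; auto.
  rewrite <- (mu_fin_add mu (fun r x => P r x /\ Li i x));
    [ | exact Hm | intro r; apply borel_inter; auto
      | intros r1 r2 x _ _ Hne [Hx1 _] [Hx2 _]; apply Hne, He; eapply dyad_disj; eauto ].
  apply mu_mono; [exact Hm | | auto | ].
  apply borel_ext with (fun x => exists r, (fun r x => (r < 2^m)%nat /\ (P r x /\ Li i x)) r x).
  apply borel_cunion. intro r; apply borel_prop, borel_inter; auto. intro; tauto.
  apply borel_Ico.
  intros x [r [_ [_ Hx]]]. exact Hx.
Qed.
Lemma IZR_e j m r : IZR (j * 2 ^ Z.of_nat m + Z.of_nat r) = IZR j * 2 ^ m + INR r.
Proof. rewrite plus_IZR, mult_IZR, <- pow_IZR, <- INR_IZR_INZ. reflexivity. Qed.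

Lemma INR_pow2 m : INR (2 ^ m) = 2 ^ m.
Proof. rewrite pow_INR. reflexivity. Qed.

Lemma dyad_sub s m j r x : (r < 2 ^ m)%nat ->
  dyad (s + m) (j * 2 ^ Z.of_nat m + Z.of_nat r) x -> dyad s j x.
Proof.
  intros Hr [H1 H2]. rewrite IZR_e in H1, H2. rewrite pow_add in H1, H2.
  pose proof (pow2_pos s) as A. pose proof (pow2_pos m) as B.
  assert (Hr' : INR r + 1 <= 2 ^ m).
  { rewrite <- INR_pow2. rewrite <- S_INR. apply le_INR. lia. }
  pose proof (pos_INR r).
  apply div_le_iff in H1; [|apply Rmult_lt_0_compat; auto].
  apply div_lt_iff in H2; [|apply Rmult_lt_0_compat; auto].
  split.
  - apply div_le_iff; auto. apply Rmult_le_reg_r with (2^m); auto. nra.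
  - apply div_lt_iff; auto. apply Rmult_lt_reg_r with (2^m); auto. nra.
Qed.

Lemma core mu n lam t p q s j m' c k :
  is_prob_measure mu -> mu (fun x => 0 <= x < 1) = 1 -> 0 < lam < 1 ->
  (forall i, (i < n)%nat -> 0 < p i) -> wifs_invariant n lam t p mu -> 1 <= q ->
  lam ^ k <= / 2 ^ (s + 1) -> lam / 2 ^ (s + 1) < lam ^ k -> 2 / lam <= 2 ^ c ->
  fsum (fun r => rpow (mu (dyad (s + (m' + c)) (j * 2 ^ Z.of_nat (m' + c) + Z.of_nat r))) q) (2 ^ (m' + c))
  <= rpow (mu (dyad2 s j)) q * (rpow 2 q * moment_sum mu q m').
Proof.
  intros Hm H1 Hl Hp Hinv Hq Hk1 Hk2 Hc.
  set (m := (m' + c)%nat).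
  set (K := lam ^ k).
  assert (HK : 0 < K) by (apply pow_lt; lra). fold K in Hk1, Hk2.
  destruct (iterate n lam t p mu ltac:(lra) Hp Hinv k) as [L [HL1 HL2]].
  fold K in HL2.
  set (a := IZR j / 2 ^ s). set (b := (IZR j + 1) / 2 ^ s).
  set (cw := fun x : R * R => if Rlt_dec (snd x) b then (if Rlt_dec a (snd x + K) then fst x else 0) else 0).
  set (J := fun r => dyad (s + m) (j * 2 ^ Z.of_nat m + Z.of_nat r)).
  set (C := rpow 2 q * moment_sum mu q m').
  set (A := fun (x : R * R) (r : nat) => mu (fun y => J r (K * y + snd x))).
  assert (HJb : forall r, borel (J r)) by (intro; apply borel_Ico).
  assert (HAb : forall (x : R * R) r, borel (fun y => J r (K * y + snd x))) by (intros; apply (borel_affine (J r)); auto).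
  assert (HA0 : forall (x : R * R) r, 0 <= A x r) by (intros; apply (pm_nonneg mu Hm); auto).
  assert (Hcw0 : forall x, In x L -> 0 <= cw x).
  { intros x Hx; unfold cw; destruct Rlt_dec; [destruct Rlt_dec|]; auto; try lra. }
  assert (F1 : forall r, (r < 2 ^ m)%nat -> mu (J r) = sumL (fun x => cw x * A x r) L).
  { intros r Hr. rewrite HL2 by auto. apply sumL_ext. intros x Hx. unfold cw, A.
    destruct (Rlt_dec (snd x) b) as [Hb|Hb]; [destruct (Rlt_dec a (snd x + K)) as [Ha|Ha]|]; auto;
    rewrite (mu_outside mu); auto; try lra;
    intros y Hy Hy01; pose proof (dyad_sub s m j r _ Hr Hy) as [D1 D2]; fold a b in D1, D2;
    assert (0 <= K * y) by (apply Rmult_le_pos; lra);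
    assert (K * y < K) by (rewrite <- (Rmult_1_r K) at 2; apply Rmult_lt_compat_l; lra); lra. }
  set (Pw := sumL cw L).
  assert (F2 : Pw <= mu (dyad2 s j)).
  { rewrite (HL2 (dyad2 s j)) by apply borel_Ico. apply sumL_le. intros x Hx. unfold cw.
    assert (0 <= fst x) by auto.
    assert (0 <= mu (fun y => dyad2 s j (K * y + snd x))).
    { apply (pm_nonneg mu Hm). apply (borel_affine (dyad2 s j)); auto. apply borel_Ico. }
    destruct (Rlt_dec (snd x) b) as [Hb|Hb]; [destruct (Rlt_dec a (snd x + K)) as [Ha|Ha]|]; try nra.
    assert (1 <= mu (fun y => dyad2 s j (K * y + snd x))).
    { rewrite <- H1. apply mu_mono; auto. apply (borel_Ico 0 1).
      apply (borel_affine (dyad2 s j)); auto. apply borel_Ico.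
      intros y Hy. pose proof (pow2_pos s) as Hs.
      assert (0 <= K * y) by (apply Rmult_le_pos; lra).
      assert (K * y < K) by (rewrite <- (Rmult_1_r K) at 2; apply Rmult_lt_compat_l; lra).
      assert (HK2 : K <= / 2 * / 2 ^ s). { rewrite pow_add in Hk1. 
        replace (2 ^ 1) with 2 in Hk1 by ring. rewrite Rinv_mult in Hk1. lra. }
      unfold a, b in *. unfold dyad2. unfold Rdiv in *. split; nra. }
    nra. }
  assert (F3 : forall x, fsum (fun r => rpow (A x r) q) (2 ^ m) <= C).
  { intro x. unfold A, J, C. apply (preimage_sum mu q s m m' (fun r => (j * 2 ^ Z.of_nat m + Z.of_nat r)%Z) K (snd x)); auto.
    intros r1 r2 E. lia.
    apply Rinv_le_contravar. apply pow2_pos.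
    replace (2 ^ (s + m)) with (2 ^ s * 2 ^ m' * 2 ^ c) by (unfold m; rewrite !pow_add; ring).
    replace (2 ^ (s + 1)) with (2 ^ s * 2) in Hk2 by (rewrite pow_add; ring).
    pose proof (pow2_pos s). pose proof (pow2_pos m'). pose proof (pow2_pos c).
    assert (HX : 0 < 2 ^ s * 2 ^ m' * 2 ^ c) by (repeat apply Rmult_lt_0_compat; auto).
    assert (E1 : 2 ^ s * 2 ^ m' * 2 ^ c * (lam / (2 ^ s * 2)) = 2 ^ m' * (lam * 2 ^ c / 2)) by (field; lra).
    assert (1 <= lam * 2 ^ c / 2).
    { apply div_le_iff in Hc; [|lra]. lra. }
    assert (2 ^ s * 2 ^ m' * 2 ^ c * (lam / (2 ^ s * 2)) <= 2 ^ s * 2 ^ m' * 2 ^ c * K).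
    { apply Rmult_le_compat_l; lra. }
    nra. }
  assert (HPw0 : 0 <= Pw) by (apply sumL_ge0; auto).
  assert (HC0 : 0 <= C).
  { unfold C. apply Rmult_le_pos. apply rpow_ge0. unfold moment_sum. apply fsum_ge0; intros; apply rpow_ge0. }
  assert (Main : Pw * fsum (fun r => rpow (mu (J r)) q) (2 ^ m) <= rpow Pw q * (Pw * C)).
  { rewrite <- fsum_scal.
    apply Rle_trans with (fsum (fun r => rpow Pw q * sumL (fun x => cw x * rpow (A x r) q) L) (2 ^ m)).
    apply fsum_le; intros r Hr. rewrite F1 by auto. apply jensenL; auto.
    rewrite fsum_scal. apply Rmult_le_compat_l. apply rpow_ge0.
    rewrite <- sumL_fsum_swap.
    apply Rle_trans with (sumL (fun x => C * cw x) L).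
    apply sumL_le; intros x Hx. rewrite fsum_scal. rewrite (Rmult_comm C). apply Rmult_le_compat_l; auto.
    rewrite sumL_scal. fold Pw. lra. }
  destruct (Req_dec Pw 0) as [HP0|HP0].
  - fold m. rewrite (fsum_ext _ (fun _ => 0)).
    assert (0 <= rpow (mu (dyad2 s j)) q) by apply rpow_ge0.
    replace (fsum (fun _ => 0) (2 ^ m)) with 0. apply Rmult_le_pos; auto.
    clear. induction (2 ^ m)%nat; simpl; try lra.
    intros r Hr. fold (J r). rewrite F1, sumL_zero; auto. apply rpow_nonpos; lra.
  - assert (0 < Pw) by (destruct HPw0; [lra|congruence]).
    apply Rle_trans with (rpow Pw q * C).
    apply Rmult_le_reg_l with Pw; auto. replace (Pw * (rpow Pw q * C)) with (rpow Pw q * (Pw * C)) by ring. exact Main.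
    apply Rmult_le_compat_r; auto. apply rpow_mono; lra.
Qed.
Lemma pow2_unbounded X : exists c : nat, X <= 2 ^ c.
Proof.
  destruct (archimed X) as [H1 H2].
  exists (Z.to_nat (up X)).
  assert (forall n, INR n <= 2 ^ n).
  { induction n. simpl; lra. rewrite S_INR. simpl. assert (1 <= 2 ^ n) by (apply pow_R1_Rle; lra). lra. }
  destruct (Z_lt_le_dec (up X) 0).
  - assert (IZR (up X) <= -1) by (apply IZR_le; lia). pose proof (pow2_pos (Z.to_nat (up X))). lra.
  - specialize (H (Z.to_nat (up X))). rewrite INR_IZR_INZ, Z2Nat.id in H by lia. lra.
Qed.

Lemma exists_k lam y : 0 < lam < 1 -> 0 < y <= 1 -> exists k, lam * y < lam ^ k <= y.
Proof.
  intros Hl Hy.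
  destruct (pow_lt_1_zero lam ltac:(rewrite Rabs_pos_eq; lra) y ltac:(lra)) as [K0 HK0].
  specialize (HK0 K0 (le_n _)). rewrite Rabs_pos_eq in HK0 by (apply pow_le; lra).
  assert (G : forall K, lam ^ K <= y -> exists k, lam * y < lam ^ k <= y).
  { induction K; intro HK.
    - exists 0%nat. simpl in *. nra.
    - destruct (Rle_dec (lam ^ K) y) as [H|H]. apply IHK; auto.
      exists (S K). simpl. split; [|simpl in HK; lra]. apply Rmult_lt_compat_l; lra. }
  apply (G K0). lra.
Qed.

Lemma liminf_bound mu q tau delta : is_Lq_spectrum mu tau -> 0 < q -> 0 < delta ->
  exists N, forall m', (N <= m')%nat -> moment_sum mu q m' <= Rpower 2 (- (tau q - delta) * INR m').
Proof.
  intros Hs Hq Hd. destruct (Hs q Hq delta Hd) as [[N HN] _].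
  exists (max N 1). intros m' Hm'. specialize (HN m' ltac:(lia)).
  assert (Hm0 : 0 < INR m') by (apply lt_0_INR; lia).
  set (S := moment_sum mu q m') in *.
  assert (S0 : 0 <= S) by (unfold S, moment_sum; apply fsum_ge0; intros; apply rpow_ge0).
  destruct (Req_dec S 0) as [->|HS]. unfold Rpower; left; apply exp_pos.
  assert (0 < S) by (destruct S0; [lra|congruence]).
  unfold log2 in HN.
  assert (Hln2 : 0 < ln 2) by (pose proof ln_lt_2; lra).
  apply div_lt_iff in HN; auto.
  assert (ln S < - (tau q - delta) * INR m' * ln 2).
  { assert (E : ln S = (ln S / ln 2) * ln 2) by (field; lra).
    assert (ln S / ln 2 < -(tau q - delta) * INR m') by lra.
    rewrite E. apply Rmult_lt_compat_r; auto. }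
  rewrite <- (exp_ln S) by auto. unfold Rpower. left; apply exp_increasing. lra.
Qed.
Lemma nat_unbounded X : exists N : nat, X <= INR N.
Proof. destruct (pow2_unbounded X) as [c Hc]. exists (2 ^ c)%nat. rewrite INR_pow2. auto. Qed.

Lemma part2 n lam t p mu tau q :
  is_prob_measure mu -> mu (fun x => 0 <= x < 1) = 1 -> 0 < lam < 1 ->
  (forall i, (i < n)%nat -> 0 < p i) -> wifs_invariant n lam t p mu ->
  is_Lq_spectrum mu tau -> 1 < q ->
  forall delta, 0 < delta -> exists M : nat, forall m : nat, (M <= m)%nat ->
     forall (s : nat) (j : Z),
       fsum (fun r => rpow (mu (dyad (s + m) (j * 2 ^ Z.of_nat m + Z.of_nat r)%Z)) q) (2 ^ m)%nat
         <= Rpower 2 (- (tau q - delta) * INR m) * rpow (mu (dyad2 s j)) q.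
Proof.
  intros Hm H1 Hl Hp Hinv Hs Hq delta Hd.
  destruct (pow2_unbounded (2 / lam)) as [c Hc].
  destruct (liminf_bound mu q tau (delta / 2) Hs ltac:(lra) ltac:(lra)) as [N0 HN0].
  destruct (nat_unbounded (2 * (q + Rabs (tau q - delta) * INR c) / delta)) as [N2 HN2].
  exists (max N0 N2 + c)%nat. intros m Hmm s j.
  destruct (Nat.le_exists_sub c m ltac:(lia)) as [m' [Em _]]. subst m.
  assert (Hy : 0 < / 2 ^ (s + 1) <= 1).
  { pose proof (pow2_pos (s+1)). split. apply Rinv_0_lt_compat; auto.
    rewrite <- Rinv_1. apply Rinv_le_contravar; [lra|]. apply pow_R1_Rle; lra. }
  destruct (exists_k lam (/ 2 ^ (s + 1)) Hl Hy) as [k [Hk1 Hk2]].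
  pose proof (core mu n lam t p q s j m' c k Hm H1 Hl Hp Hinv ltac:(lra) Hk2 Hk1 Hc) as HC.
  eapply Rle_trans; [exact HC|].
  rewrite Rmult_comm. apply Rmult_le_compat_r. apply rpow_ge0.
  rewrite rpow_pos by lra.
  apply Rle_trans with (Rpower 2 q * Rpower 2 (- (tau q - delta / 2) * INR m')).
  apply Rmult_le_compat_l. unfold Rpower; left; apply exp_pos. apply HN0; lia.
  rewrite <- Rpower_plus. apply Rle_Rpower; [lra|].
  assert (INR N2 <= INR m') by (apply le_INR; lia).
  assert (Hab : (tau q - delta) * INR c <= Rabs (tau q - delta) * INR c).
  { apply Rmult_le_compat_r. apply pos_INR. apply Rle_abs. }
  assert (2 * (q + Rabs (tau q - delta) * INR c) <= delta * INR m').
  { apply div_le_iff in HN2; auto. nra. }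
  rewrite plus_INR. nra.
Qed.
Lemma dyad_range s m j k : (forall x, dyad (s + m) k x -> dyad s j x) ->
  (j * 2 ^ Z.of_nat m <= k < j * 2 ^ Z.of_nat m + Z.of_nat (2 ^ m))%Z.
Proof.
  intro H. pose proof (pow2_pos s) as Hs. pose proof (pow2_pos m) as Hm.
  assert (HH : 2 ^ (s + m) = 2 ^ s * 2 ^ m) by apply pow_add.
  assert (Hx : dyad (s + m) k (IZR k / 2 ^ (s + m))).
  { split. lra. unfold Rdiv; apply Rmult_lt_compat_r. apply Rinv_0_lt_compat, pow2_pos. lra. }
  destruct (H _ Hx) as [A B]. rewrite HH in A, B.
  assert (E : IZR k / (2 ^ s * 2 ^ m) * 2 ^ s = IZR k / 2 ^ m) by (field; lra).
  apply (proj1 (div_le_iff _ _ _ Hs)) in A. rewrite E in A.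
  apply Rmult_le_compat_r with (r := 2 ^ m) in A; [|lra].
  unfold Rdiv in A; rewrite Rmult_assoc, Rinv_l, Rmult_1_r in A by lra.
  apply (proj1 (div_lt_iff _ _ _ Hs)) in B. rewrite E in B.
  assert (B' : IZR k < (IZR j + 1) * 2 ^ m).
  { apply Rmult_lt_compat_r with (r := 2 ^ m) in B; auto.
    unfold Rdiv in B; rewrite Rmult_assoc, Rinv_l, Rmult_1_r in B by lra. exact B. }
  assert (Ej : IZR (j * 2 ^ Z.of_nat m) = IZR j * 2 ^ m) by (rewrite mult_IZR, <- pow_IZR; reflexivity).
  assert (En : IZR (Z.of_nat (2 ^ m)) = 2 ^ m) by (rewrite <- INR_IZR_INZ; apply INR_pow2).
  split.
  - apply le_IZR. rewrite Ej. lra.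
  - apply lt_IZR. rewrite plus_IZR, Ej, En. lra.
Qed.
Lemma sumL_filter_split {X} (g : X -> R) (P : X -> bool) l :
  sumL g l = sumL g (filter P l) + sumL g (filter (fun x => negb (P x)) l).
Proof. induction l; simpl; [lra|]. destruct (P a); simpl; rewrite IHl; lra. Qed.

Lemma sumL_single {X} (g : X -> R) l x : (forall y, 0 <= g y) -> NoDup l -> (forall y, In y l -> y = x) ->
  sumL g l <= g x.
Proof. intros Hg Hnd Hl. destruct l as [|y [|z l]]; simpl.
  apply Hg. rewrite (Hl y) by (simpl; auto). lra.
  exfalso. inversion Hnd; subst. apply H1. rewrite (Hl y), (Hl z) by (simpl; auto). simpl; auto. Qed.

Lemma sumL_range (f : Z -> R) base N : (forall k, 0 <= f k) ->
  forall D, NoDup D -> (forall k, In k D -> (base <= k < base + Z.of_nat N)%Z) ->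
  sumL f D <= fsum (fun r => f (base + Z.of_nat r)%Z) N.
Proof.
  intros Hf. induction N; intros D Hnd HD.
  - destruct D as [|k D]. simpl; lra. specialize (HD k (or_introl eq_refl)). simpl in HD. lia.
  - set (x := (base + Z.of_nat N)%Z).
    rewrite (sumL_filter_split f (Z.eqb x)). simpl.
    assert (sumL f (filter (Z.eqb x) D) <= f x).
    { apply sumL_single; auto. apply NoDup_filter; auto.
      intros y Hy. apply filter_In in Hy. destruct Hy as [_ Hy]. apply Z.eqb_eq in Hy; auto. }
    assert (sumL f (filter (fun y => negb (Z.eqb x y)) D) <= fsum (fun r => f (base + Z.of_nat r)%Z) N).
    { apply IHN. apply NoDup_filter; auto. intros k Hk. apply filter_In in Hk. destruct Hk as [Hk Hk2].
      specialize (HD k Hk). apply Bool.negb_true_iff, Z.eqb_neq in Hk2. unfold x in Hk2. lia. }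
    fold x. lra.
Qed.

Lemma part1 n lam t p mu tau q alpha Tstar :
  is_prob_measure mu -> mu (fun x => 0 <= x < 1) = 1 -> 0 < lam < 1 ->
  (forall i, (i < n)%nat -> 0 < p i) -> wifs_invariant n lam t p mu ->
  is_Lq_spectrum mu tau -> 1 < q ->
  derivable_pt_lim tau q alpha -> is_legendre tau alpha Tstar ->
  forall kappa, 0 < kappa ->
     exists eta, 0 < eta /\
     exists M : nat, forall m : nat, (M <= m)%nat ->
     forall (s : nat) (j : Z) (D : list Z),
       NoDup D ->
       (forall k, In k D -> forall x, dyad (s + m) k x -> dyad s j x) ->
       INR (length D) <= Rpower 2 ((Tstar - kappa) * INR m) ->
       coll_sum mu q (s + m) D
         <= Rpower 2 (- (tau q + eta) * INR m) * rpow (mu (dyad2 s j)) q.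
Proof.
  intros Hm H1 Hl Hp Hinv Hs Hq Hder [Hleg _] kappa Hk.
  set (eps := kappa / (2 * q)).
  assert (Heps : 0 < eps) by (unfold eps; apply Rdiv_lt_0_compat; lra).
  destruct (Hder eps Heps) as [Dl HDl].
  set (h := Dl / 2).
  assert (Hh : 0 < h) by (unfold h; pose proof (cond_pos Dl); lra).
  assert (Hder2 : Rabs ((tau (q + h) - tau q) / h - alpha) < eps).
  { apply HDl. lra. rewrite Rabs_pos_eq by lra. unfold h; pose proof (cond_pos Dl); lra. }
  set (q' := q + h).
  set (delta := kappa * (h / q) / 4).
  assert (Hdelta : 0 < delta) by (unfold delta; apply Rmult_lt_0_compat; [apply Rmult_lt_0_compat; [lra|apply Rdiv_lt_0_compat; lra]|lra]).
  destruct (part2 n lam t p mu tau q' Hm H1 Hl Hp Hinv Hs ltac:(unfold q'; lra) delta Hdelta) as [M HM].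
  set (eta := kappa * h / (4 * (q + h))).
  exists eta. split. unfold eta; apply Rdiv_lt_0_compat; nra.
  exists M. intros m Hmm s j D Hnd Hsub Hlen.
  set (b := fun k => rpow (mu (dyad (s + m) k)) q).
  change (coll_sum mu q (s + m) D) with (sumL b D).
  set (N := INR (length D)) in *.
  set (Zq := rpow (mu (dyad2 s j)) q) in *.
  set (Rb := Rpower 2 (- (tau q + eta) * INR m) * Zq).
  set (rho := q' / q).
  set (u := h / q).
  assert (Hu : 0 < u) by (unfold u; apply Rdiv_lt_0_compat; lra).
  assert (Hrho : rho = 1 + u) by (unfold rho, u, q'; field; lra).
  assert (Hqrho : q * rho = q') by (unfold rho; field; lra).
  destruct (Rle_dec (sumL b D) Rb) as [ok|nok]; [exact ok| exfalso].
  assert (HZ0 : 0 <= Zq) by apply rpow_ge0.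
  assert (HR0 : 0 <= Rb) by (apply Rmult_le_pos; auto; unfold Rpower; left; apply exp_pos).
  assert (Hb0 : forall k, 0 <= b k) by (intro; apply rpow_ge0).
  assert (HN : 0 < N).
  { unfold N. destruct D as [|k0 D']. simpl in nok. lra. apply lt_0_INR; simpl; lia. }
  pose proof (jensenL (fun _ => 1) b rho D ltac:(lra) ltac:(intros; lra) ltac:(intros; apply Hb0)) as J.
  rewrite sumL_one in J. fold N in J.
  rewrite (sumL_ext (fun x => 1 * b x) b) in J by (intros; ring).
  rewrite (sumL_ext (fun x => 1 * rpow (b x) rho) (fun k => rpow (mu (dyad (s + m) k)) q')) in J
    by (intros; unfold b; rewrite rpow_rpow, Hqrho; ring).
  assert (HY : sumL (fun k => rpow (mu (dyad (s + m) k)) q') D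
     <= Rpower 2 (- (tau q' - delta) * INR m) * rpow (mu (dyad2 s j)) q').
  { eapply Rle_trans; [|apply HM; auto].
    apply (sumL_range (fun k => rpow (mu (dyad (s + m) k)) q')). intro; apply rpow_ge0. auto.
    intros k Hk0. apply (dyad_range s). apply Hsub; auto. }
  set (Y := Rpower 2 (- (tau q' - delta) * INR m) * rpow (mu (dyad2 s j)) q') in *.
  assert (HrN : rpow N rho = N * Rpower N (rho - 1)).
  { rewrite rpow_pos by auto. replace rho with (1 + (rho - 1)) at 1 by ring.
    rewrite Rpower_plus, Rpower_1 by auto. reflexivity. }
  rewrite HrN in J.
  assert (J2 : rpow (sumL b D) rho <= Rpower N (rho - 1) * Y).
  { apply Rmult_le_reg_l with N; auto.
    eapply Rle_trans; [exact J|]. rewrite Rmult_assoc. apply Rmult_le_compat_l; [lra|].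
    apply Rmult_le_compat_l; [unfold Rpower; left; apply exp_pos|exact HY]. }
  assert (HNp : Rpower N (rho - 1) <= Rpower 2 ((Tstar - kappa) * INR m * (rho - 1))).
  { rewrite <- Rpower_mult. apply Rle_Rpower_l. lra. split; auto. }
  assert (HY0 : 0 <= Y) by (eapply Rle_trans; [|exact HY]; apply sumL_ge0; intros; apply rpow_ge0).
  assert (J3 : rpow Rb rho < rpow (sumL b D) rho) by (apply rpow_lt; lra).
  assert (HRb : rpow Rb rho = Rpower 2 (- (tau q + eta) * INR m * rho) * rpow (mu (dyad2 s j)) q').
  { unfold Rb, Zq. rewrite rpow_mul by (try apply rpow_ge0; unfold Rpower; left; apply exp_pos).
    rewrite rpow_rpow, Hqrho. rewrite rpow_pos by (unfold Rpower; apply exp_pos). rewrite Rpower_mult. reflexivity. }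
  assert (Hd1 : tau q' - tau q > (alpha - eps) * h).
  { apply Rabs_def2 in Hder2. destruct Hder2 as [_ Hd].
    assert (E1 : tau q' - tau q = ((tau (q + h) - tau q) / h) * h) by (unfold q'; field; lra).
    rewrite E1. apply Rmult_lt_compat_r; auto. lra. }
  assert (Hlegq : Tstar <= alpha * q - tau q) by (apply Hleg; lra).
  assert (Hlegu : Tstar * u <= (alpha * q - tau q) * u) by (apply Rmult_le_compat_r; lra).
  assert (F1 : eps * h = kappa * u / 2) by (unfold eps, u; field; lra).
  assert (F2 : alpha * h = alpha * q * u) by (unfold u; field; lra).
  assert (F3 : eta * (1 + u) = kappa * u / 4) by (unfold eta, u; field; lra).
  assert (F4 : delta = kappa * u / 4) by (unfold delta, u; field; lra).
  assert (HE : 0 <= - (tau q + eta) * (1 + u) - (Tstar - kappa) * u + tau q' - delta).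
  { assert (Hd2 : tau q' - tau q > alpha * h - eps * h) by lra. lra. }
  assert (Hm0 : 0 <= INR m) by apply pos_INR.
  assert (Hexp : (Tstar - kappa) * INR m * (rho - 1) + - (tau q' - delta) * INR m
                 <= - (tau q + eta) * INR m * rho).
  { rewrite Hrho.
    assert (0 <= INR m * (- (tau q + eta) * (1 + u) - (Tstar - kappa) * u + tau q' - delta)) by nra.
    nra. }
  assert (Fin : Rpower N (rho - 1) * Y <= rpow Rb rho).
  { rewrite HRb. unfold Y. apply Rle_trans with (Rpower 2 ((Tstar - kappa) * INR m * (rho - 1)) * (Rpower 2 (- (tau q' - delta) * INR m) * rpow (mu (dyad2 s j)) q')).
    apply Rmult_le_compat_r; auto.
    rewrite <- Rmult_assoc, <- Rpower_plus. apply Rmult_le_compat_r. apply rpow_ge0.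
    apply Rle_Rpower; lra. }
  lra.
Qed.

Theorem proposition3p10
  (n : nat) (lam : R) (t p : nat -> R) (mu : (R -> Prop) -> R)
  (tau : R -> R) (q alpha Tstar : R) :
  (1 <= n)%nat ->
  0 < lam < 1 ->
  (forall i, (i < n)%nat -> 0 < p i) ->
  fsum p n = 1 ->
  is_prob_measure mu ->
  wifs_invariant n lam t p mu ->
  mu (fun x => 0 <= x < 1) = 1 ->
  is_Lq_spectrum mu tau ->
  1 < q ->
  derivable_pt_lim tau q alpha ->
  is_legendre tau alpha Tstar ->
  (* (i) *)
  (forall kappa, 0 < kappa ->
     exists eta, 0 < eta /\
     exists M : nat, forall m : nat, (M <= m)%nat ->
     forall (s : nat) (j : Z) (D : list Z),
       NoDup D ->
       (forall k, In k D -> forall x, dyad (s + m) k x -> dyad s j x) ->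
       INR (length D) <= Rpower 2 ((Tstar - kappa) * INR m) ->
       coll_sum mu q (s + m) D
         <= Rpower 2 (- (tau q + eta) * INR m) * rpow (mu (dyad2 s j)) q)
  /\
  (* (ii) *)
  (forall delta, 0 < delta ->
     exists M : nat, forall m : nat, (M <= m)%nat ->
     forall (s : nat) (j : Z),
       fsum (fun r => rpow (mu (dyad (s + m) (j * 2 ^ Z.of_nat m + Z.of_nat r)%Z)) q)
            (2 ^ m)%nat
         <= Rpower 2 (- (tau q - delta) * INR m) * rpow (mu (dyad2 s j)) q).
Proof.
  intros Hn Hl Hp Hpsum Hm Hinv H1 Hs Hq Hder Hleg. split.
  - apply (part1 n lam t p mu tau q alpha Tstar); auto.
  - apply (part2 n lam t p mu tau q); auto.
Qed.
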